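(* Let $\mathcal{A}$ and $\mathcal{B}$ be equality languages, $c\in\mathbb{Z}_+$ and $k\in\mathbb{N}$. If $\neq_{c+1}\notin\langle\mathcal{A}\cup\mathcal{B}\rangle_{\leq k}$, then every satisfiable instance of $\mathrm{CSP}_{\le k}(\mathcal{A},\mathcal{B})$ has a solution whose range is contained in $[c]=\{1,\dots,c\}$.
   Context: An equality language is a structure with domain $\mathbb{N}$ and finite signature whose relations are first-order definable in $(\mathbb{N};=)$. $\neq_r=\{(t_1,\dots,t_r)\in\mathbb{N}^r:|\{t_1,\dots,t_r\}|=r\}$. $\langle\mathcal{A}\cup\mathcal{B}\rangle_{\leq k}$ is the set of relations pp-definable over $\mathcal{A}\cup\mathcal{B}$ (formulas $\exists\bar y\,\bigwedge_i R_i(\mathbf{x}_i)$ with $R_i$ relations of $\mathcal{A}\cup\mathcal{B}$ or equality) using at most $k$ atoms with relations from $\mathcal{B}$. $\mathrm{CSP}_{\le k}(\mathcal{A},\mathcal{B})$: given an instance $(V,C_1\cup C_2)$ with $C_1$ over $\mathcal{A}$, $C_2$ over $\mathcal{B}$, $|C_2|\le k$, decide satisfiability. *)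

(* Defs.v *)
From Stdlib Require List.
From mathcomp Require Import all_boot.
Set Implicit Arguments. Unset Strict Implicit. Unset Printing Implicit Defensive.

Record erel := ERel { ar : nat; rholds : ('I_ar -> nat) -> Prop }.

Inductive fo :=
| FEq : nat -> nat -> fo
| FNot : fo -> fo
| FAnd : fo -> fo -> fo
| FEx : nat -> fo -> fo.

Definition upd (v : nat -> nat) (i a : nat) : nat -> nat :=
  fun j => if j == i then a else v j.

Fixpoint fo_eval (v : nat -> nat) (f : fo) : Prop :=
  match f with
  | FEq i j => v i = v j
  | FNot g => ~ fo_eval v g
  | FAnd g h => fo_eval v g /\ fo_eval v h
  | FEx i g => exists a, fo_eval (upd v i a) g
  end.

Definition fo_definable (R : erel) : Prop :=
  exists f : fo, forall v : nat -> nat,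
    @rholds R (fun j : 'I_(ar R) => v (nat_of_ord j)) <-> fo_eval v f.

Definition equality_language (L : seq erel) : Prop :=
  forall R, List.In R L -> fo_definable R.

Record constraint (L : seq erel) (V : Type) := Constr {
  c_rel : erel;
  c_in : List.In c_rel L;
  c_args : 'I_(ar c_rel) -> V }.

Definition sat_constr (L : seq erel) (V : Type) (s : V -> nat)
  (C : constraint L V) : Prop :=
  @rholds (c_rel C) (fun j => s (@c_args L V C j)).

Definition neq_rel (r : nat) : erel := @ERel r (fun t => injective t).

(* <A u B>_{<= k}: pp-definable over A u B (with equality), using at most
   k atoms whose relation comes from B.  Variables: the r free ones (inl)
   and m existentially quantified ones (inr). *)
Definition pp_def_le (A B : seq erel) (k : nat) (S : erel) : Prop :=
  exists (m : nat)
         (EQs : seq (('I_(ar S) + 'I_m) * ('I_(ar S) + 'I_m)))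
         (As : seq (constraint A ('I_(ar S) + 'I_m)))
         (Bs : seq (constraint B ('I_(ar S) + 'I_m))),
    size Bs <= k /\
    forall t : 'I_(ar S) -> nat,
      @rholds S t <->
      exists y : 'I_m -> nat,
        let val := fun z => match z with inl i => t i | inr j => y j end in
        (forall e, List.In e EQs -> val e.1 = val e.2) /\
        (forall C, List.In C As -> sat_constr val C) /\
        (forall C, List.In C Bs -> sat_constr val C).

Definition solution (A B : seq erel) (n : nat)
  (C1 : seq (constraint A 'I_n)) (C2 : seq (constraint B 'I_n))
  (s : 'I_n -> nat) : Prop :=
  (forall C, List.In C C1 -> sat_constr s C) /\
  (forall C, List.In C C2 -> sat_constr s C).

(* Main.v *)
Require Import Defs.
From mathcomp Require Import all_boot.
From Stdlib Require Import Classical FunctionalExtensionality.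

Lemma fo_perm f : forall v (pi rho : nat -> nat), cancel pi rho -> cancel rho pi ->
  (fo_eval v f <-> fo_eval (fun j => pi (v j)) f).
Proof.
elim: f => [i j|g IH|g IHg h IHh|i g IH] v pi rho pr rp /=.
- split; [by move=> ->| exact: (can_inj pr)].
- by rewrite (IH v pi rho pr rp).
- by rewrite (IHg v pi rho pr rp) (IHh v pi rho pr rp).
- split.
  + case=> a Ha; exists (pi a).
    have -> : upd (fun j => pi (v j)) i (pi a) = (fun j => pi (upd v i a j)).
      by apply: functional_extensionality => j; rewrite /upd; case: (j == i).
    exact: (proj1 (IH _ pi rho pr rp) Ha).
  + case=> a Ha; exists (rho a).
    apply: (proj2 (IH _ pi rho pr rp)).
    have <- : upd (fun j => pi (v j)) i a = (fun j => pi (upd v i (rho a) j)).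
      by apply: functional_extensionality => j; rewrite /upd; case: (j == i); rewrite ?rp.
    exact: Ha.
Qed.

Lemma fodef_inv R (pi rho : nat -> nat) : fo_definable R -> cancel pi rho -> cancel rho pi ->
  forall t, @rholds R t -> @rholds R (fun j => pi (t j)).
Proof.
case=> f Hf pr rp t Ht.
pose v n := if @insub nat (fun k => k < ar R) 'I_(ar R) n is Some j then t j else 0.
have E1 : (fun j : 'I_(ar R) => v j) = t.
  by apply: functional_extensionality => j; rewrite /v valK.
have E2 : (fun j : 'I_(ar R) => pi (v j)) = (fun j => pi (t j)).
  by apply: functional_extensionality => j; rewrite /v valK.
rewrite -E2; apply/(Hf (fun n => pi (v n))).
apply: (proj1 (fo_perm f v pi rho pr rp)); apply/Hf; by rewrite E1.
Qed.

Lemma sol_inv A B n (C1 : seq (constraint A 'I_n)) (C2 : seq (constraint B 'I_n)) s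
  (pi rho : nat -> nat) : equality_language A -> equality_language B ->
  cancel pi rho -> cancel rho pi -> solution C1 C2 s -> solution C1 C2 (fun x => pi (s x)).
Proof.
move=> eA eB pr rp [H1 H2]; split=> C HC.
- exact: (@fodef_inv _ _ _ (eA _ (c_in C)) pr rp _ (H1 C HC)).
- exact: (@fodef_inv _ _ _ (eB _ (c_in C)) pr rp _ (H2 C HC)).
Qed.

Definition swapn (p q z : nat) := if z == p then q else if z == q then p else z.

Lemma swapnK p q : involutive (swapn p q).
Proof.
move=> z; rewrite /swapn.
case: (eqVneq z p) => [->|zp]; first by rewrite eqxx; case: (eqVneq q p) => [->|]; rewrite ?eqxx.
case: (eqVneq z q) => [->|zq]; first by rewrite eqxx.
by rewrite (negPf zp) (negPf zq).
Qed.

Lemma exists_perm (a b : seq nat) : uniq a -> uniq b -> size a = size b ->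
  exists pi rho : nat -> nat, [/\ cancel pi rho, cancel rho pi &
    forall k, k < size a -> pi (nth 0 a k) = nth 0 b k].
Proof.
elim: a b => [|x a IH] [|y b] //=.
- move=> _ _ _; exists id, id; split=> //.
- move=> /andP[xa ua] /andP[yb ub] [sz].
  have [pi [rho [pr rp Hk]]] := IH b ua ub sz.
  exists (fun z => swapn (pi x) y (pi z)), (fun z => rho (swapn (pi x) y z)).
  split.
  + by move=> z /=; rewrite swapnK pr.
  + by move=> z /=; rewrite rp swapnK.
  + case=> [|k] /=; first by rewrite /swapn eqxx.
    move=> lk; rewrite Hk // /swapn.
    have -> : (nth 0 b k == pi x) = false.
      apply/negP => /eqP E; move: E; rewrite -Hk // => /(can_inj pr) E.
      by move: xa; rewrite -E mem_nth.
    have -> : (nth 0 b k == y) = false.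
      apply/negP => /eqP E; move: yb; rewrite -E mem_nth // -sz //.
    by [].
Qed.

Lemma ex_min (P : nat -> Prop) d : P d -> exists d0, P d0 /\ forall d', P d' -> d0 <= d'.
Proof.
elim/ltn_ind: d => d IH Pd.
case: (classic (exists d', d' < d /\ P d')) => [[d' [lt Pd']]|H].
- exact: (IH d' lt Pd').
- exists d; split=> // d' Pd'; case: (ltnP d' d) => // lt.
  by exfalso; apply: H; exists d'.
Qed.

Definition mapc L V W (f : V -> W) (C : constraint L V) : constraint L W :=
  @Constr L W (c_rel C) (c_in C) (fun j => f (@c_args L V C j)).


Lemma In_of_mem (T : eqType) (x : T) (s : seq T) : x \in s -> List.In x s.
Proof. elim: s => //= a s IH; rewrite in_cons => /orP[/eqP ->|h]; [by left|by right; apply: IH]. Qed.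

Lemma In_map_inv (T U : Type) (f : T -> U) (y : U) (s : seq T) :
  List.In y (map f s) -> exists x, f x = y /\ List.In x s.
Proof.
elim: s => //= a s IH [<-|h]; first by exists a; split=> //; left.
by have [x [? ?]] := IH h; exists x; split=> //; right.
Qed.

Lemma In_map' (T U : Type) (f : T -> U) (x : T) (s : seq T) :
  List.In x s -> List.In (f x) (map f s).
Proof. elim: s => //= a s IH [->|h]; [by left|by right; apply: IH]. Qed.

Lemma In_cat_inv (T : Type) (x : T) (s1 s2 : seq T) :
  List.In x (s1 ++ s2) -> List.In x s1 \/ List.In x s2.
Proof. elim: s1 => //= [|a s IH]; first by right. case=> [->|h]; first by left; left.
by case: (IH h) => ?; [left; right|right]. Qed.

Lemma In_catl (T : Type) (x : T) (s1 s2 : seq T) : List.In x s1 -> List.In x (s1 ++ s2).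
Proof. elim: s1 => //= a s IH [->|h]; [by left|by right; apply: IH]. Qed.

Lemma In_catr (T : Type) (x : T) (s1 s2 : seq T) : List.In x s2 -> List.In x (s1 ++ s2).
Proof. elim: s1 => //= a s IH h; right; exact: IH. Qed.

Arguments In_of_mem {T x s}.
Arguments In_map_inv {T U f y s}.
Arguments In_map' {T U} f {x s}.
Arguments In_cat_inv {T x s1 s2}.
Arguments In_catl {T x s1 s2}.
Arguments In_catr {T x s1 s2}.

Theorem lemma23 (A B : seq erel) (c k : nat) :
  equality_language A -> equality_language B -> 0 < c ->
  ~ pp_def_le A B k (neq_rel c.+1) ->
  forall (n : nat) (C1 : seq (constraint A 'I_n)) (C2 : seq (constraint B 'I_n)),
    size C2 <= k ->
    (exists s, solution C1 C2 s) ->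
    exists s, solution C1 C2 s /\ forall x : 'I_n, 1 <= s x <= c.
Proof.
move=> eA eB c0 Hnot n C1 C2 szC2 [s0 Hs0].
pose cnt (s : 'I_n -> nat) := size (undup (map s (enum 'I_n))).
have [d [[s [Hs Hd]] Hmin]] := ex_min (fun d => exists s, solution C1 C2 s /\ cnt s = d)
   (cnt s0) (ex_intro _ s0 (conj Hs0 erefl)).
pose vals := undup (map s (enum 'I_n)).
have uv : uniq vals := undup_uniq _.
have sv : size vals = d := Hd.
have memv : forall x, s x \in vals by move=> x; rewrite mem_undup map_f // mem_enum.
case: (leqP d c) => [dc | cd].
- have [pi [rho [pr rp Hk]]] := @exists_perm vals (iota 1 d) uv (iota_uniq _ _)
     (etrans sv (esym (size_iota 1 d))).
  exists (fun x => pi (s x)); split; first exact: (@sol_inv _ _ _ _ _ _ _ _ eA eB pr rp Hs).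
  move=> x.
  have ix : index (s x) vals < d by rewrite -sv index_mem.
  rewrite -(nth_index 0 (memv x)) Hk ?index_mem // nth_iota // add1n ltnS /=.
  exact: leq_trans ix dc.
- exfalso; apply: Hnot.
  have dn : d <= n.
    by rewrite -sv (leq_trans (size_undup _)) // size_map size_enum_ord.
  pose x0 : 'I_n := Ordinal (leq_trans (ltn_trans c0 cd) dn).
  pose rep (k : nat) : 'I_n := odflt x0 [pick x | s x == nth 0 vals k].
  have Hrep : forall k, k < d -> s (rep k) = nth 0 vals k.
    move=> q kd; rewrite /rep; case: pickP => [x /eqP //|H]; exfalso.
    have : nth 0 vals q \in vals by apply: mem_nth; rewrite sv.
    rewrite mem_undup => /mapP [x _ Ex].
    by move: (H x); rewrite Ex eqxx.
  pose ix (x : 'I_n) := rep (index (s x) vals).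
  have ixd : forall x, index (s x) vals < d by move=> x; rewrite -sv index_mem.
  have Hix : forall x, s (ix x) = s x by move=> x; rewrite Hrep ?nth_index.
  pose EQs := [seq (@inl 'I_c.+1 'I_n i, @inr 'I_c.+1 'I_n (rep i)) | i <- enum 'I_c.+1]
           ++ [seq (@inr 'I_c.+1 'I_n x, @inr 'I_c.+1 'I_n (ix x)) | x <- enum 'I_n].
  exists n, EQs, (map (@mapc _ _ _ (@inr 'I_c.+1 'I_n)) C1), (map (@mapc _ _ _ (@inr 'I_c.+1 'I_n)) C2).
  split; first by rewrite size_map.
  move=> t /=; split.
  + move=> tinj.
    have ua : uniq (take c.+1 vals) := take_uniq _ uv.
    have ub : uniq (map t (enum 'I_c.+1)) by rewrite map_inj_uniq ?enum_uniq.
    have szab : size (take c.+1 vals) = size (map t (enum 'I_c.+1)).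
      by rewrite size_takel ?sv // size_map size_enum_ord.
    have [pi [rho [pr rp Hk]]] := @exists_perm _ _ ua ub szab.
    have Hpi : forall i : 'I_c.+1, pi (s (rep i)) = t i.
      move=> i; rewrite Hrep; last by apply: leq_trans (ltn_ord i) cd.
      rewrite -(nth_take 0 (ltn_ord i)) Hk; last by rewrite size_takel ?sv.
      by rewrite (nth_map i) ?size_enum_ord // nth_ord_enum.
    have Hsol := @sol_inv _ _ _ _ _ _ _ _ eA eB pr rp Hs.
    exists (fun x => pi (s x)); split; [|split].
    * move=> e /In_cat_inv [] /In_map_inv [z [<- _]] /=; first by rewrite Hpi.
      by rewrite Hix.
    * by move=> C /In_map_inv [C' [<- HC']]; exact: (proj1 Hsol C' HC').
    * by move=> C /In_map_inv [C' [<- HC']]; exact: (proj2 Hsol C' HC').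
  + case=> y [Heq [HA HB]].
    have Hy : solution C1 C2 y.
      split=> C HC; [exact: (HA (@mapc _ _ _ (@inr 'I_c.+1 'I_n) C) (In_map' _ HC))
                    |exact: (HB (@mapc _ _ _ (@inr 'I_c.+1 'I_n) C) (In_map' _ HC))].
    have Hyix : forall x, y x = y (ix x).
      move=> x; apply: (Heq (@inr 'I_c.+1 'I_n x, @inr 'I_c.+1 'I_n (ix x))).
      by apply/In_catr/In_map'/In_of_mem; rewrite mem_enum.
    have Hyt : forall i : 'I_c.+1, t i = y (rep i).
      move=> i; apply: (Heq (@inl 'I_c.+1 'I_n i, @inr 'I_c.+1 'I_n (rep i))).
      by apply/In_catl/In_map'/In_of_mem; rewrite mem_enum.
    have dy : d <= cnt y by apply: Hmin; exists y.
    move=> i j Eij; apply/eqP; apply/negP => /negP ne.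
    pose g := map (fun k => y (rep k)) (iota 0 d).
    have sub : {subset undup (map y (enum 'I_n)) <= undup g}.
      move=> v; rewrite !mem_undup => /mapP [x _ ->].
      rewrite Hyix; apply: map_f; rewrite mem_iota add0n /=; exact: ixd.
    have le1 : cnt y <= size (undup g) := uniq_leq_size (undup_uniq _) sub.
    have id_ : i < d by apply: leq_trans (ltn_ord i) cd.
    have jd : j < d by apply: leq_trans (ltn_ord j) cd.
    have nu : ~~ uniq g.
      apply/negP => ug.
      have := nth_uniq 0 (s:=g) (i:=i) (j:=j); rewrite size_map size_iota => /(_ id_ jd ug).
      rewrite (nth_map 0) ?size_iota // (nth_map 0) ?size_iota // !nth_iota // !add0n.
      rewrite -!Hyt Eij eqxx => /esym /eqP /val_inj E; by rewrite E eqxx in ne.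
    have : size (undup g) < size g by rewrite ltn_size_undup.
    rewrite size_map size_iota => lt2.
    by have := leq_ltn_trans (leq_trans dy le1) lt2; rewrite ltnn.
Qed.
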